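(* Let $Z_i=(X_i,Y_i)$, $i=1,\dots,n+1$, be i.i.d. from a distribution on $\mathbb R^p\times\mathbb R$, let $V(\cdot)$ be a real-valued score function with $V_i=V(Z_i)$, and fix $\alpha\in(0,1)$. Consider the localizer $H(x_1,x_2)=\exp(-\|x_1-x_2\|/h)$ with $h>0$ such that $\mathbb P\big(\sum_{i=1}^{n+1}H(X_{n+1},X_i)<\frac{1}{1-\alpha}\big)\ge\varepsilon$ for some $\varepsilon\in(\alpha,1)$. Let $p^H_{n+1,j}=H(X_{n+1},X_j)/\sum_{k=1}^{n+1}H(X_{n+1},X_k)$ and $\hat{\mathcal F}=\sum_{j=1}^{n}p^H_{n+1,j}\delta_{V_j}+p^H_{n+1,n+1}\delta_{+\infty}$, and let $C(X_{n+1})=\{y: V(X_{n+1},y)\le Q(\alpha;\hat{\mathcal F})\}$. Then $$\mathbb P\big(Q(\alpha;\hat{\mathcal F})=\infty\big)\ge\varepsilon,\qquad \mathbb P\big(Y_{n+1}\in C(X_{n+1})\big)=\mathbb P\big(V_{n+1}\le Q(\alpha;\hat{\mathcal F})\big)\ge\varepsilon.$$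
   Context: For a distribution $\mathcal F$ on $\mathbb R\cup\{+\infty\}$, $Q(\alpha;\mathcal F)=\inf\{t:\mathbb P_{T\sim\mathcal F}(T\le t)\ge\alpha\}$; $\delta_v$ is the point mass at $v$; $\|\cdot\|$ is a norm on $\mathbb R^p$. *)

(* Defs.v *)
From HB Require Import structures.
From mathcomp Require Import all_boot all_order all_algebra.
From mathcomp Require Import all_classical all_reals all_analysis.
Set Implicit Arguments. Unset Strict Implicit. Unset Printing Implicit Defensive.
Import Order.TTheory GRing.Theory Num.Theory.
Import numFieldNormedType.Exports.
Local Open Scope classical_set_scope.
Local Open Scope ring_scope.

Definition is_norm (R : realType) (p : nat) (nrm : 'rV[R]_p -> R) : Prop :=
  [/\ forall x y, nrm (x + y) <= nrm x + nrm y,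
      forall (a : R) x, nrm (a *: x) = `|a| * nrm x &
      forall x, nrm x = 0 -> x = 0].

Definition localizer (R : realType) (p : nat) (nrm : 'rV[R]_p -> R) (h : R)
  (x1 x2 : 'rV[R]_p) : R := expR (- (nrm (x1 - x2) / h)).

(* A finitely supported distribution on R U {+oo}: atoms v j with weights w j.
   Its cdf t |-> P_{T ~ F}(T <= t), and its quantile
   Q(alpha; F) = inf { t in R U {+oo} : P(T <= t) >= alpha }. *)
Definition disc_cdf (R : realType) (m : nat) (w : 'I_m -> R) (v : 'I_m -> \bar R)
  (t : \bar R) : R := \sum_(j < m | (v j <= t)%E) w j.

Definition disc_quantile (R : realType) (m : nat) (alpha : R)
  (w : 'I_m -> R) (v : 'I_m -> \bar R) : \bar R :=
  ereal_inf [set t : \bar R | t != -oo%E /\ alpha <= disc_cdf w v t].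

(* Localized weights p^H_{n+1,j} = H(X_{n+1},X_j) / sum_k H(X_{n+1},X_k);
   indices 'I_n.+1, with ord_max playing the role of n+1. *)
Definition pH (R : realType) (p n : nat) (Hl : 'rV[R]_p -> 'rV[R]_p -> R)
  (x : 'I_n.+1 -> 'rV[R]_p) (j : 'I_n.+1) : R :=
  Hl (x ord_max) (x j) / \sum_(k < n.+1) Hl (x ord_max) (x k).

Definition Fhat_atoms (R : realType) (n : nat) (v : 'I_n.+1 -> R) (j : 'I_n.+1)
  : \bar R := if (j < n)%N then (v j)%:E else +oo%E.

Definition Qhat (R : realType) (p n : nat) (alpha : R)
  (Hl : 'rV[R]_p -> 'rV[R]_p -> R) (x : 'I_n.+1 -> 'rV[R]_p) (v : 'I_n.+1 -> R)
  : \bar R := disc_quantile alpha (pH Hl x) (Fhat_atoms v).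

(* Events {Z_i in (-oo,a] x (-oo,b]}; they generate sigma(Z_i). *)
Definition Zbox_event (R : realType) (d : measure_display) (Omega : measurableType d)
  (p n : nat) (X : 'I_n.+1 -> Omega -> 'rV[R]_p) (Y : 'I_n.+1 -> Omega -> R)
  (i : 'I_n.+1) (a : 'rV[R]_p) (b : R) : set Omega :=
  [set w | (forall j, X i w ord0 j <= a ord0 j) /\ Y i w <= b].

Definition sigmaZ (R : realType) (d : measure_display) (Omega : measurableType d)
  (p n : nat) (X : 'I_n.+1 -> Omega -> 'rV[R]_p) (Y : 'I_n.+1 -> Omega -> R)
  (i : 'I_n.+1) : set (set Omega) :=
  <<s [set E | exists a b, E = Zbox_event X Y i a b] >>.

Definition iid_Z (R : realType) (d : measure_display) (Omega : measurableType d)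
  (P : probability Omega R)
  (p n : nat) (X : 'I_n.+1 -> Omega -> 'rV[R]_p) (Y : 'I_n.+1 -> Omega -> R) : Prop :=
  [/\ (forall i j, measurable_fun setT (fun w => X i w ord0 j)),
      (forall i, measurable_fun setT (Y i)),
      (forall A : 'I_n.+1 -> set Omega, (forall i, sigmaZ X Y i (A i)) ->
          P (\bigcap_(i in [set: 'I_n.+1]) A i) = (\prod_(i < n.+1) P (A i))%E) &
      (forall i a b, P (Zbox_event X Y i a b) = P (Zbox_event X Y ord0 a b))].

(* Main.v *)
Require Import Defs.
From HB Require Import structures.
From mathcomp Require Import all_boot all_order all_algebra.
From mathcomp Require Import all_classical all_reals all_analysis.
From mathcomp Require Import measurable_realfun.
From mathcomp Require Import ring lra.
Import Order.TTheory GRing.Theory Num.Theory.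
Import numFieldNormedType.Exports.
Local Open Scope classical_set_scope.
Local Open Scope ring_scope.

Section Det.
Variable R : realType.
Variable m : nat.
Variables (w : 'I_m.+1 -> R) (v : 'I_m.+1 -> R) (alpha : R).

Lemma atom_le j (t : R) :
  (Fhat_atoms v j <= t%:E)%E = ((j < m)%N && (v j <= t)).
Proof. by rewrite /Fhat_atoms; case: ifP => _ //=; rewrite lee_fin. Qed.

Lemma cdf_fin (t : R) :
  disc_cdf w (Fhat_atoms v) t%:E = \sum_(j < m.+1 | (j < m)%N && (v j <= t)) w j.
Proof. by apply: eq_bigl => j; rewrite atom_le. Qed.

Lemma Q_inf : 0 < alpha -> (forall j, 0 <= w j) ->
  disc_quantile alpha w (Fhat_atoms v) = +oo%E <->
  \sum_(j < m.+1 | (j < m)%N) w j < alpha.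
Proof.
move=> a0 w0; split.
  move=> Qoo; rewrite ltNge; apply/negP => aT.
  pose t := \sum_(j < m.+1) `|v j|.
  have vt j : v j <= t.
    rewrite /t (bigD1 j) //=; apply: le_trans (ler_norm _) _.
    by rewrite lerDl sumr_ge0.
  have : (disc_quantile alpha w (Fhat_atoms v) <= t%:E)%E.
    apply: ereal_inf_lbound; split => //.
    by rewrite cdf_fin; under eq_bigl do rewrite vt andbT.
  by rewrite Qoo.
move=> Ta; apply/eqP; rewrite eq_le leey /=; apply: le_ereal_inf_tmp.
move=> [s| |] [] //= _; rewrite cdf_fin => h.
have : \sum_(j < m.+1 | (j < m)%N && (v j <= s)) w j <= \sum_(j < m.+1 | (j < m)%N) w j.
  rewrite [X in _ <= X]big_mkcond [X in X <= _]big_mkcond; apply: ler_sum => j _.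
  by case: (j < m)%N; case: (v j <= s) => //=.
move=> le1; have := lt_le_trans Ta (le_trans h le1); by rewrite ltxx.
Qed.

Lemma Q_ge (r : R) : 0 < alpha ->
  (r%:E <= disc_quantile alpha w (Fhat_atoms v))%E <->
  (forall k : 'I_m.+1, (k < m)%N -> v k < r ->
     \sum_(j < m.+1 | (j < m)%N && (v j <= v k)) w j < alpha).
Proof.
move=> a0; split.
  move=> rQ k km vkr; rewrite ltNge; apply/negP => ah.
  have : (disc_quantile alpha w (Fhat_atoms v) <= (v k)%:E)%E.
    by apply: ereal_inf_lbound; split => //; rewrite cdf_fin.
  move=> /(le_trans rQ); rewrite lee_fin => /(lt_le_trans vkr); by rewrite ltxx.
move=> H; apply: le_ereal_inf_tmp.
move=> [s| |] [] //= _; rewrite ?leey // cdf_fin => h.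
rewrite lee_fin leNgt; apply/negP => sr.
have [j0 Pj0|H0] := pickP (fun j0 : 'I_m.+1 => (j0 < m)%N && (v j0 <= s)); last first.
  by move: h; rewrite big_pred0 // leNgt a0.
case: (@arg_maxP _ _ _ j0 (fun j : 'I_m.+1 => (j < m)%N && (v j <= s)) v Pj0) => k /andP[km vks] kmax.
have := H k km (le_lt_trans vks sr).
rewrite ltNge; move/negP; apply; apply: (le_trans h); rewrite le_eqVlt; apply/orP; left; apply/eqP.
apply: eq_bigl => j; apply/idP/idP.
  by move=> Pj; rewrite (andP Pj).1 /=; exact: kmax.
by case/andP=> -> /= /le_trans; apply.
Qed.
End Det.
Arguments Q_inf {R m w v alpha}.
Arguments Q_ge {R m w v alpha}.

Section Meas.
Variables (d : measure_display) (Omega : measurableType d) (R : realType).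

Lemma mlt (f g : Omega -> R) : measurable_fun setT f -> measurable_fun setT g ->
  measurable [set w | f w < g w].
Proof.
move=> mf mg; have := measurable_fun_ltr mf mg measurableT (_ : measurable [set true]).
by rewrite setTI; apply.
Qed.

Lemma mle (f g : Omega -> R) : measurable_fun setT f -> measurable_fun setT g ->
  measurable [set w | f w <= g w].
Proof.
move=> mf mg; have := measurable_fun_ler mf mg measurableT (_ : measurable [set true]).
by rewrite setTI; apply.
Qed.

Lemma mfinI (I : finType) (F : I -> set Omega) : (forall i, measurable (F i)) ->
  measurable [set w | forall i, F i w].
Proof.
move=> mF; have -> : [set w | forall i, F i w] = ~` \bigcup_i ~` F i.
  apply/seteqP; split => w /=.
    by move=> H [i _ /= nF]; exact: nF (H i).
  by move=> H i; apply: contrapT => nF; apply: H; exists i.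
apply: measurableC; apply: countable_bigcupT_measurable; first exact: countableP.
by move=> i; apply: measurableC.
Qed.

Lemma mcntU (I : countType) (F : I -> set Omega) : (forall i, measurable (F i)) ->
  measurable [set w | exists i, F i w].
Proof.
move=> mF; have -> : [set w | exists i, F i w] = \bigcup_i F i.
  by apply/seteqP; split => w /=; [move=> [i Fi]; exists i|move=> [i _ Fi]; exists i].
by apply: countable_bigcupT_measurable; first exact: countableP.
Qed.

End Meas.
Arguments mlt {d Omega R f g}.
Arguments mle {d Omega R f g}.
Arguments mfinI {d Omega I F}.
Arguments mcntU {d Omega I F}.

Section Norm.
Variables (R : realType) (p : nat) (nrm : 'rV[R]_p -> R).
Hypothesis Hn : is_norm nrm.

Lemma nrm0 : nrm 0 = 0.
Proof. by case: Hn => _ hs _; rewrite -(scale0r (0 : 'rV[R]_p)) hs normr0 mul0r. Qed.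

Lemma nrmN x : nrm (- x) = nrm x.
Proof. by case: Hn => _ hs _; rewrite -scaleN1r hs normrN1 mul1r. Qed.

Lemma nrm_ge0 x : 0 <= nrm x.
Proof.
case: Hn => ht _ _; have := ht x (- x); rewrite subrr nrm0 nrmN.
by move=> h; rewrite -(pmulr_rge0 _ (ltr0n R 2)) mulr2n mulrDl mul1r.
Qed.

Lemma nrm_tri x y : nrm x <= nrm y + nrm (x - y).
Proof. by case: Hn => ht _ _; have := ht y (x - y); rewrite addrC subrK. Qed.

Lemma nrm_sum (I : Type) (r : seq I) (F : I -> 'rV[R]_p) :
  nrm (\sum_(i <- r) F i) <= \sum_(i <- r) nrm (F i).
Proof.
elim/big_rec2: _ => [|i b a _ h]; first by rewrite nrm0.
by case: Hn => ht _ _; apply: le_trans (ht _ _) _; apply: lerD.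
Qed.

Definition nC := \sum_(j < p) nrm (delta_mx 0 j).

Lemma nC_ge0 : 0 <= nC.
Proof. by apply: sumr_ge0 => j _; apply: nrm_ge0. Qed.

Lemma nrm_bound (x : 'rV[R]_p) (M : R) : (forall j, `|x ord0 j| <= M) -> nrm x <= nC * M.
Proof.
move=> hM; rewrite {1}(row_sum_delta x); apply: le_trans (nrm_sum _ _ _) _.
rewrite /nC mulr_suml; apply: ler_sum => j _; case: Hn => _ hs _.
by rewrite hs mulrC; apply: ler_wpM2l; [apply: nrm_ge0|apply: hM].
Qed.

End Norm.
Arguments nC {R p}.
Arguments nC_ge0 {R p nrm}.
Arguments nrm_tri {R p nrm}.
Arguments nrm_bound {R p nrm}.
Arguments nrm0 {R p nrm}.
Arguments nrm_ge0 {R p nrm}.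

Section NormMeas.
Variables (d : measure_display) (Omega : measurableType d) (R : realType).
Variables (p : nat) (nrm : 'rV[R]_p -> R).
Hypothesis Hn : is_norm nrm.

Lemma mabs (g : Omega -> R) (a : R) : measurable_fun setT g ->
  measurable_fun setT (fun w => `|g w - a|).
Proof.
move=> mg.
exact: (measurableT_comp (@normr_measurable R setT) (measurable_funB mg (measurable_cst a))).
Qed.

Lemma nrm_meas (f : Omega -> 'rV[R]_p) :
  (forall j, measurable_fun setT (fun w => f w ord0 j)) ->
  measurable_fun setT (fun w => nrm (f w)).
Proof.
move=> mf; apply: (measurability _ (RGenInftyO.measurableE R)) => //.
move=> _ [_ [c ->] <-].
pose qv (q : 'rV[rat]_p) : 'rV[R]_p := \row_j ratr (q ord0 j).
pose S (qr : 'rV[rat]_p * rat) := [set w | (0 < ratr qr.2 :> R) /\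
   nrm (qv qr.1) + nC nrm * ratr qr.2 < c /\
   forall j, `|f w ord0 j - ratr (qr.1 ord0 j)| < ratr qr.2].
have nC0 := nC_ge0 Hn.
have -> : setT `&` (fun w => nrm (f w)) @^-1` `]-oo, c[ = [set w | exists qr, S qr w].
  apply/seteqP; split => w /=.
    move=> [_]; rewrite /= in_itv /= => hc.
    set δ := c - nrm (f w); have δ0 : 0 < δ by rewrite subr_gt0.
    have C2 : 0 < 2 * nC nrm + 2 by lra.
    have [r hr] := @rat_in_itvoo R 0 (δ / (2 * nC nrm + 2)) (divr_gt0 δ0 C2).
    rewrite in_itv /= in hr; case/andP: hr => r0 rd.
    have : forall j, exists q : rat, `|f w ord0 j - ratr q| < ratr r.
      move=> j.
      have hlt : f w ord0 j - ratr r < f w ord0 j + ratr r by lra.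
      have [q hq] := @rat_in_itvoo R (f w ord0 j - ratr r) (f w ord0 j + ratr r) hlt.
      exists q; rewrite in_itv /= in hq; case/andP: hq => h1 h2.
      by rewrite ltr_norml; apply/andP; split; lra.
    move=> /choice [g hg].
    exists (\row_j g j, r); split => //=; split; last by move=> j; rewrite mxE; exact: hg.
    have h1 : nrm (qv (\row_j g j)) <= nrm (f w) + nC nrm * ratr r.
      apply: le_trans (nrm_tri Hn _ (f w)) _; rewrite lerD2l.
      apply: nrm_bound => // j; rewrite !mxE -normrN opprB; exact/ltW/hg.
    have h2 : ratr r * (2 * nC nrm + 2) < δ by rewrite -ltr_pdivlMr.
    rewrite /δ in h2; nra.
  move=> [[q r] [r0 [hc hj]]]; split => //=; rewrite in_itv /=.
  apply: le_lt_trans (nrm_tri Hn _ (qv q)) _; rewrite addrC.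
  apply: le_lt_trans hc; rewrite addrC lerD2l.
  apply: nrm_bound => // j; rewrite !mxE; exact/ltW/hj.
apply: mcntU => -[q r].
case: (boolP ((0 < ratr r :> R) && (nrm (qv q) + nC nrm * ratr r < c))) => [/andP[h1 h2]|hn].
  have -> : S (q, r) = [set w | forall j, `|f w ord0 j - ratr (q ord0 j)| < ratr r].
    by apply/seteqP; split => w /=; [case=> _ []|move=> h; split].
  by apply: mfinI => j; apply: mlt; [exact: mabs|exact: measurable_cst].
have -> : S (q, r) = set0.
  by apply/seteqP; split => w //= -[h1 [h2 _]]; move: hn; rewrite h1 h2.
exact: measurable0.
Qed.
End NormMeas.
Arguments nrm_meas {d Omega R p nrm}.

Theorem proposition1 (R : realType) (d : measure_display) (Omega : measurableType d)
  (P : probability Omega R) (p n : nat)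
  (X : 'I_n.+1 -> Omega -> 'rV[R]_p) (Y : 'I_n.+1 -> Omega -> R)
  (V : 'rV[R]_p -> R -> R) (nrm : 'rV[R]_p -> R) (alpha h eps : R) :
  iid_Z P X Y ->
  (forall i, measurable_fun setT (fun w => V (X i w) (Y i w))) ->
  is_norm nrm ->
  0 < alpha < 1 ->
  0 < h ->
  alpha < eps < 1 ->
  (P [set w | (\sum_(i < n.+1) localizer nrm h (X ord_max w) (X i w) < 1 / (1 - alpha))%R]
     >= eps%:E)%E ->
  let Q := fun w => Qhat alpha (localizer nrm h) (fun i => X i w)
                         (fun i => V (X i w) (Y i w)) in
  let C := fun w => [set y : R | ((V (X ord_max w) y)%:E <= Q w)%E] in
  (P [set w | Q w = +oo%E] >= eps%:E)%E /\
  P [set w | C w (Y ord_max w)] = P [set w | ((V (X ord_max w) (Y ord_max w))%:E <= Q w)%E] /\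
  (P [set w | ((V (X ord_max w) (Y ord_max w))%:E <= Q w)%E] >= eps%:E)%E.
Proof.
move=> [mX mY _ _] mV Hn /andP[a0 a1] h0 /andP[ae e1] hA Q C.
pose Hf j w := localizer nrm h (X ord_max w) (X j w).
pose Sf w := \sum_(i < n.+1) Hf i w.
pose vf j w := V (X j w) (Y j w).
have Hpos j w : 0 < Hf j w by apply: expR_gt0.
have Hmax w : Hf ord_max w = 1.
  by rewrite /Hf /localizer subrr (nrm0 Hn) mul0r oppr0 expR0.
have Ssplit w : Sf w = \sum_(j < n.+1 | (j < n)%N) Hf j w + 1.
  rewrite /Sf /=. rewrite big_ord_recr /= Hmax; congr (_ + _).
  rewrite [RHS]big_mkcond [RHS]big_ord_recr /= ltnn addr0.
  by apply: eq_bigr => i _; rewrite ltn_ord.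
have Sge w : 0 < Sf w.
  rewrite Ssplit; apply: (lt_le_trans ltr01); rewrite lerDr.
  by apply: sumr_ge0 => j _; apply: ltW.
have mH j : measurable_fun setT (Hf j).
  rewrite /Hf /localizer.
  have -> : (fun w => expR (- (nrm (X ord_max w - X j w) / h))) =
            expR \o (fun w => nrm (X ord_max w - X j w) * (- h^-1)).
    by apply/funext => w /=; rewrite mulrN.
  apply: measurableT_comp; first exact: measurable_expR.
  apply: measurable_funM; last exact: measurable_cst.
  apply: (nrm_meas Hn) => k.
  have -> : (fun w => (X ord_max w - X j w) ord0 k) =
            (fun w => X ord_max w ord0 k - X j w ord0 k).
    by apply/funext => w; rewrite !mxE.
  exact: measurable_funB.
have mS : measurable_fun setT Sf by apply: measurable_sum.
have QE w : Q w = disc_quantile alpha (fun j => Hf j w / Sf w)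
                   (Fhat_atoms (fun i => vf i w)) by [].
have w0 w : forall j, 0 <= Hf j w / Sf w.
  by move=> j; apply: divr_ge0; apply: ltW.
have QinfE w : Q w = +oo%E <-> Sf w < 1 / (1 - alpha).
  have key : (\sum_(j < n.+1 | (j < n)%N) Hf j w / Sf w < alpha) = (Sf w < 1 / (1 - alpha)).
    rewrite -mulr_suml ltr_pdivrMr // ltr_pdivlMr ?subr_gt0 // (Ssplit w).
    set T := \sum_(j < n.+1 | (j < n)%N) Hf j w.
    by apply/idP/idP => hh; nra.
  rewrite QE; split => [/(Q_inf a0 (w0 w))|hh]; first by rewrite key.
  by apply/(Q_inf a0 (w0 w)); rewrite key.
have E1 : [set w | Q w = +oo%E] = [set w | Sf w < 1 / (1 - alpha)].
  by apply/seteqP; split => w /= /QinfE.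
pose F k w := \sum_(j < n.+1 | (j < n)%N && (vf j w <= vf k w)) Hf j w.
have Bchar w : ((V (X ord_max w) (Y ord_max w))%:E <= Q w)%E <->
    forall k : 'I_n.+1, (k < n)%N -> vf k w < vf ord_max w -> F k w < alpha * Sf w.
  rewrite QE.
  have e k : (\sum_(j < n.+1 | (j < n)%N && (vf j w <= vf k w)) Hf j w / Sf w < alpha)
           = (F k w < alpha * Sf w) by rewrite -mulr_suml ltr_pdivrMr.
  split => [/(Q_ge _ a0) hh k km lt|hh]; first by rewrite -e; apply: hh.
  by apply/(Q_ge _ a0) => k km lt; rewrite e; exact: hh.
have mF k : measurable_fun setT (F k).
  have -> : F k = (fun w => \sum_(j < n.+1)
      (if (j < n)%N && (vf j w <= vf k w) then Hf j w else 0)).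
    by apply/funext => w; rewrite /F big_mkcond.
  apply: measurable_sum => j; apply: measurable_fun_ifT; last exact: measurable_cst.
    by case: (j < n)%N; [exact: measurable_fun_ler (mV j) (mV k) | exact: measurable_cst].
  exact: mH.
have mB : measurable [set w | ((V (X ord_max w) (Y ord_max w))%:E <= Q w)%E].
  have -> : [set w | ((V (X ord_max w) (Y ord_max w))%:E <= Q w)%E] =
      [set w | forall k : 'I_n.+1,
         [set w | (k < n)%N -> vf k w < vf ord_max w -> F k w < alpha * Sf w] w].
    by apply/seteqP; split => w /= /Bchar.
  apply: mfinI => k; case: (k < n)%N; last first.
    suff -> : [set w | false -> vf k w < vf ord_max w -> F k w < alpha * Sf w] = setT by exact: measurableT.
    by apply/seteqP; split => w //=.
  have -> : [set w | true -> vf k w < vf ord_max w -> F k w < alpha * Sf w] =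
      [set w | vf ord_max w <= vf k w] `|` [set w | F k w < alpha * Sf w].
    apply/seteqP; split => w /=.
      move=> hh; case: (leP (vf ord_max w) (vf k w)) => hl; first by left.
      by right; apply: hh.
    case=> hh _ hl //; by move: (le_lt_trans hh hl); rewrite ltxx.
  apply: measurableU; first exact: mle (mV _) (mV _).
  by apply: mlt; [exact: mF | apply: measurable_funM => //; exact: measurable_cst].
split; first by rewrite E1.
split; first by [].
apply: le_trans hA _; apply: le_measure; rewrite ?inE.
- exact: mlt mS (measurable_cst _).
- exact: mB.
move=> w /= hw; have -> := proj2 (QinfE w) hw; exact: leey.
Qed.
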